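(* For an integer sequence $(S_n)_{n\ge0}$, integers $k\ge1$ and $n\ge0$, set $\sigma_S(k,n) = \sum_{i=1}^{k} S_{n+i}$. Then for all $k \geq 1$ and $n \geq 0$: (1) $\sigma_P(k,n) = \tfrac12(Q_{n+k+1}-Q_{n+1})$, and this equals $2P_{k/2}P_{k/2+n+1}$ if $k\equiv 0 \pmod 4$ and $Q_{k/2}Q_{k/2+n+1}$ if $k \equiv 2 \pmod 4$; (2) $\sigma_Q(k,n) = P_{n+k+1}-P_{n+1}$, and this equals $2P_{k/2}Q_{k/2+n+1}$ if $k\equiv 0 \pmod 4$ and $2Q_{k/2}P_{k/2+n+1}$ if $k \equiv 2 \pmod 4$; (3) $\sigma_B(k,n) = \tfrac14(P_{2k+2n+1}-P_{2n+1})$, and this equals $\tfrac12 P_k Q_{k+2n+1}$ if $k$ is even and $\tfrac12 Q_k P_{k+2n+1}$ if $k$ is odd; (4) $\sigma_C(k,n) = \tfrac12(Q_{2k+2n+1}-Q_{2n+1})$, and this equals $2P_kP_{k+2n+1}$ if $k$ is even and $Q_kQ_{k+2n+1}$ if $k$ is odd; (5) $\sigma_c(k,n) = \tfrac12(Q_{2k+2n}-Q_{2n})$, and this equals $2P_kP_{k+2n}$ if $k$ is even and $Q_kQ_{k+2n}$ if $k$ is odd.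
   Context: The Pell sequence $(P_n)_{n\ge0}$: $P_0=0$, $P_1=1$, $P_n = 2P_{n-1}+P_{n-2}$. The associated Pell sequence $(Q_n)_{n\ge0}$: $Q_0=1$, $Q_1=1$, $Q_n=2Q_{n-1}+Q_{n-2}$. The balancing sequence $(B_n)_{n\ge0}$: $B_0=0$, $B_1=1$, $B_n=6B_{n-1}-B_{n-2}$. The Lucas-balancing sequence $(C_n)_{n\ge0}$: $C_0=1$, $C_1=3$, $C_n=6C_{n-1}-C_{n-2}$. The Lucas-cobalancing sequence $(c_n)_{n\ge0}$: $c_0=-1$, $c_1=1$, $c_n=6c_{n-1}-c_{n-2}$. *)

(* Defs.v *)
(* sequences are int-valued (c_0 = -1); fractions are
   evaluated in rat. *)
From mathcomp Require Import all_boot all_order all_algebra.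
Set Implicit Arguments. Unset Strict Implicit. Unset Printing Implicit Defensive.
Import Order.TTheory GRing.Theory Num.Theory.
Local Open Scope ring_scope.

Fixpoint Pell (n : nat) : int :=
  match n with
  | 0 => 0
  | 1 => 1
  | (m.+1 as k).+1 => 2 * Pell k + Pell m
  end.

Fixpoint QPell (n : nat) : int :=
  match n with
  | 0 => 1
  | 1 => 1
  | (m.+1 as k).+1 => 2 * QPell k + QPell m
  end.

Fixpoint Bal (n : nat) : int :=
  match n with
  | 0 => 0
  | 1 => 1
  | (m.+1 as k).+1 => 6 * Bal k - Bal m
  end.

Fixpoint LBal (n : nat) : int :=
  match n with
  | 0 => 1
  | 1 => 3
  | (m.+1 as k).+1 => 6 * LBal k - LBal m
  end.

Fixpoint LCob (n : nat) : int :=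
  match n with
  | 0 => -1
  | 1 => 1
  | (m.+1 as k).+1 => 6 * LCob k - LCob m
  end.

Definition sigma (S : nat -> int) (k n : nat) : int :=
  \sum_(1 <= i < k.+1) S (n + i)%N.

Definition toQ (z : int) : rat := z%:~R.

(* Main.v *)
Require Import Defs.
From mathcomp Require Import all_boot all_order all_algebra.
From mathcomp Require Import zify ring.
Import GRing.Theory Num.Theory.
Local Open Scope ring_scope.

Lemma P2 n : Pell n.+2 = 2 * Pell n.+1 + Pell n. Proof. by []. Qed.
Lemma Q2 n : QPell n.+2 = 2 * QPell n.+1 + QPell n. Proof. by []. Qed.

Lemma PQ n : Pell n.+1 = Pell n + QPell n /\ QPell n.+1 = QPell n + 2 * Pell n.
Proof.
elim: n => [|n [IH1 IH2]]; first by split.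
rewrite P2 Q2 IH1 IH2; split; ring.
Qed.

Lemma addPQ m n : Pell (m + n) = Pell m * QPell n + QPell m * Pell n /\
  QPell (m + n) = QPell m * QPell n + 2 * Pell m * Pell n.
Proof.
elim: m => [|m [IH1 IH2]].
  by rewrite add0n /=; split; ring.
have [a1 a2] := PQ m. have [b1 b2] := PQ (m + n).
rewrite addSn b1 b2 IH1 IH2 a1 a2; split; ring.
Qed.

Lemma cass n : QPell n ^+ 2 - 2 * Pell n ^+ 2 = (-1) ^+ n.
Proof.
elim: n => [|n IH]; first by [].
have [a1 a2] := PQ n.
have -> : (-1)^+n.+1 = -1 * (-1)^+n :> int by rewrite exprS.
rewrite a1 a2 -IH; ring.
Qed.

Lemma G a b :
  let s := QPell b ^+ 2 - 2 * Pell b ^+ 2 in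
  [/\ QPell (a + b + b) - 4 * Pell b * Pell (a + b) = s * QPell a,
      QPell (a + b + b) - 2 * QPell b * QPell (a + b) = - s * QPell a,
      Pell (a + b + b) - 2 * Pell b * QPell (a + b) = s * Pell a &
      Pell (a + b + b) - 2 * QPell b * Pell (a + b) = - s * Pell a].
Proof.
move=> s; rewrite /s.
have [e1 e2] := addPQ (a + b) b. have [e3 e4] := addPQ a b.
rewrite e1 e2 e3 e4; split; ring.
Qed.

Lemma sigma0 S n : sigma S 0 n = 0.
Proof. by rewrite /sigma big_geq. Qed.
Lemma sigmaS S k n : sigma S k.+1 n = sigma S k n + S (n + k.+1)%N.
Proof. by rewrite /sigma big_nat_recr. Qed.

Lemma Pdouble j : Pell (j.+4) = 6 * Pell j.+2 - Pell j.
Proof. rewrite (P2 j.+2) (P2 j.+1) (P2 j); ring. Qed.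
Lemma Qdouble j : QPell (j.+4) = 6 * QPell j.+2 - QPell j.
Proof. rewrite (Q2 j.+2) (Q2 j.+1) (Q2 j); ring. Qed.

Lemma BalE n : Bal n * 2 = Pell (2 * n) /\ Bal n.+1 * 2 = Pell (2 * n.+1).
Proof.
elim: n => [|n [IH1 IH2]]; first by split.
split => //.
have -> : (2 * n.+2 = (2 * n).+4)%N by lia.
have E : (2 * n.+1 = (2*n).+2)%N by lia.
rewrite E in IH2.
rewrite Pdouble -IH1 -IH2.
have -> : Bal n.+2 = 6 * Bal n.+1 - Bal n by [].
ring.
Qed.

Lemma LBalE n : LBal n = QPell (2 * n) /\ LBal n.+1 = QPell (2 * n.+1).
Proof.
elim: n => [|n [IH1 IH2]]; first by split.
split => //.
have -> : (2 * n.+2 = (2 * n).+4)%N by lia.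
have E : (2 * n.+1 = (2*n).+2)%N by lia.
rewrite E in IH2.
rewrite Qdouble -IH1 -IH2.
have -> : LBal n.+2 = 6 * LBal n.+1 - LBal n by [].
ring.
Qed.

Lemma LCobE n : LCob n.+1 = QPell (2 * n).+1 /\ LCob n.+2 = QPell (2 * n.+1).+1.
Proof.
elim: n => [|n [IH1 IH2]]; first by split.
split => //.
have -> : ((2 * n.+2).+1 = (2 * n).+1.+4)%N by lia.
have E : ((2 * n.+1).+1 = (2*n).+1.+2)%N by lia.
rewrite E in IH2.
rewrite Qdouble -IH1 -IH2.
have -> : LCob n.+3 = 6 * LCob n.+2 - LCob n.+1 by [].
ring.
Qed.

Lemma S1 k n : sigma Pell k n * 2 = QPell (n + k + 1) - QPell (n + 1).
Proof.
elim: k => [|k IH]; first by rewrite sigma0 addn0; ring.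
rewrite sigmaS mulrDl IH.
have -> : (n + k.+1 + 1 = (n + k + 1).+1)%N by lia.
have -> : (n + k.+1 = n + k + 1)%N by lia.
have [_ e] := PQ (n + k + 1). rewrite e; ring.
Qed.

Lemma S2 k n : sigma QPell k n = Pell (n + k + 1) - Pell (n + 1).
Proof.
elim: k => [|k IH]; first by rewrite sigma0 addn0; ring.
rewrite sigmaS IH.
have -> : (n + k.+1 + 1 = (n + k + 1).+1)%N by lia.
have -> : (n + k.+1 = n + k + 1)%N by lia.
have [e _] := PQ (n + k + 1). rewrite e; ring.
Qed.

Lemma S3 k n : sigma Bal k n * 4 = Pell (2 * k + 2 * n + 1) - Pell (2 * n + 1).
Proof.
elim: k => [|k IH]; first by rewrite sigma0; ring.
rewrite sigmaS mulrDl IH.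
have [e _] := BalE (n + k.+1).
have -> : Bal (n + k.+1) * 4 = Bal (n + k.+1) * 2 * 2 by ring.
rewrite e.
have -> : (2 * k.+1 + 2 * n + 1 = (2 * k + 2 * n + 1).+2)%N by lia.
have -> : (2 * (n + k.+1) = (2 * k + 2 * n + 1).+1)%N by lia.
rewrite P2; ring.
Qed.

Lemma S4 k n : sigma LBal k n * 2 = QPell (2 * k + 2 * n + 1) - QPell (2 * n + 1).
Proof.
elim: k => [|k IH]; first by rewrite sigma0; ring.
rewrite sigmaS mulrDl IH.
have [e _] := LBalE (n + k.+1).
rewrite e.
have -> : (2 * k.+1 + 2 * n + 1 = (2 * k + 2 * n + 1).+2)%N by lia.
have -> : (2 * (n + k.+1) = (2 * k + 2 * n + 1).+1)%N by lia.
rewrite Q2; ring.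
Qed.

Lemma S5 k n : sigma LCob k n * 2 = QPell (2 * k + 2 * n) - QPell (2 * n).
Proof.
elim: k => [|k IH]; first by rewrite sigma0; ring.
rewrite sigmaS mulrDl IH.
have -> : (n + k.+1 = (n + k).+1)%N by lia.
have [e _] := LCobE (n + k).
rewrite e.
have -> : (2 * k.+1 + 2 * n = (2 * k + 2 * n).+2)%N by lia.
have -> : (2 * (n + k)).+1 = (2 * k + 2 * n).+1 by lia.
rewrite Q2; ring.
Qed.

Lemma sgn b : QPell b ^+ 2 - 2 * Pell b ^+ 2 = if odd b then -1 else 1.
Proof. by rewrite cass -signr_odd; case: (odd b); rewrite ?expr0 ?expr1. Qed.

Lemma par0 k : (k %% 4 = 0)%N -> odd (k %/ 2) = false /\ k = (k %/ 2 + k %/ 2)%N.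
Proof.
move=> h; split; last by lia.
have : ((k %/ 2) %% 2 = 0)%N by lia.
by rewrite modn2; case: (odd _).
Qed.

Lemma par2 k : (k %% 4 = 2)%N -> odd (k %/ 2) = true /\ k = (k %/ 2 + k %/ 2)%N.
Proof.
move=> h; split; last by lia.
have : ((k %/ 2) %% 2 = 1)%N by lia.
by rewrite modn2; case: (odd _).
Qed.

Lemma parE k : ~~ odd k -> k = (k %/ 2 + k %/ 2)%N.
Proof. move=> h; have : (k %% 2 = 0)%N by rewrite modn2; case: (odd k) h. lia. Qed.

Lemma toQd (x y : int) (d : nat) : x * d%:R = y -> (0 < d)%N -> toQ x = toQ y / d%:R.
Proof.
move=> <- hd; rewrite /toQ intrM.
have -> : ((d%:R : int)%:~R : rat) = d%:R by rewrite pmulrn intz.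
by rewrite mulfK // pnatr_eq0 -lt0n.
Qed.

Lemma toQB x y : toQ (x - y) = toQ x - toQ y.
Proof. by rewrite /toQ intrB. Qed.

Lemma toQM x y : toQ (x * y) = toQ x * toQ y.
Proof. by rewrite /toQ intrM. Qed.
Theorem theorem14 (k n : nat) (hk : (1 <= k)%N) :
  (* (1) *)
  [/\ toQ (sigma Pell k n) = (toQ (QPell (n + k + 1)) - toQ (QPell (n + 1))) / 2,
      (k %% 4 = 0)%N ->
        sigma Pell k n = 2 * Pell (k %/ 2) * Pell (k %/ 2 + n + 1) &
      (k %% 4 = 2)%N ->
        sigma Pell k n = QPell (k %/ 2) * QPell (k %/ 2 + n + 1)] /\
  (* (2) *)
  [/\ sigma QPell k n = Pell (n + k + 1) - Pell (n + 1),
      (k %% 4 = 0)%N ->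
        sigma QPell k n = 2 * Pell (k %/ 2) * QPell (k %/ 2 + n + 1) &
      (k %% 4 = 2)%N ->
        sigma QPell k n = 2 * QPell (k %/ 2) * Pell (k %/ 2 + n + 1)] /\
  (* (3) *)
  [/\ toQ (sigma Bal k n) = (toQ (Pell (2 * k + 2 * n + 1)) - toQ (Pell (2 * n + 1))) / 4,
      ~~ odd k ->
        toQ (sigma Bal k n) = toQ (Pell k) * toQ (QPell (k + 2 * n + 1)) / 2 &
      odd k ->
        toQ (sigma Bal k n) = toQ (QPell k) * toQ (Pell (k + 2 * n + 1)) / 2] /\
  (* (4) *)
  [/\ toQ (sigma LBal k n) = (toQ (QPell (2 * k + 2 * n + 1)) - toQ (QPell (2 * n + 1))) / 2,
      ~~ odd k ->
        sigma LBal k n = 2 * Pell k * Pell (k + 2 * n + 1) &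
      odd k ->
        sigma LBal k n = QPell k * QPell (k + 2 * n + 1)] /\
  (* (5) *)
  [/\ toQ (sigma LCob k n) = (toQ (QPell (2 * k + 2 * n)) - toQ (QPell (2 * n))) / 2,
      ~~ odd k ->
        sigma LCob k n = 2 * Pell k * Pell (k + 2 * n) &
      odd k ->
        sigma LCob k n = QPell k * QPell (k + 2 * n)].
Proof.
split; [|split; [|split; [|split]]]; split.
- by rewrite (@toQd _ _ 2 (S1 k n)) // toQB.
- move=> h; have [ho hk'] := par0 k h; set m := (k %/ 2)%N in ho hk' *.
  have [g _ _ _] := G (n + 1) m; rewrite sgn ho in g.
  apply/(@mulIf _ 2) => //; rewrite S1.
  rewrite [in LHS]hk'.
  have -> : (n + (m + m) + 1 = n + 1 + m + m)%N by lia.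
  have -> : (m + n + 1 = n + 1 + m)%N by lia.
  lia.
- move=> h; have [ho hk'] := par2 k h; set m := (k %/ 2)%N in ho hk' *.
  have [_ g _ _] := G (n + 1) m; rewrite sgn ho in g.
  apply/(@mulIf _ 2) => //; rewrite S1.
  rewrite [in LHS]hk'.
  have -> : (n + (m + m) + 1 = n + 1 + m + m)%N by lia.
  have -> : (m + n + 1 = n + 1 + m)%N by lia.
  lia.
- exact: S2.
- move=> h; have [ho hk'] := par0 k h; set m := (k %/ 2)%N in ho hk' *.
  have [_ _ g _] := G (n + 1) m; rewrite sgn ho in g.
  rewrite S2 [in LHS]hk'.
  have -> : (n + (m + m) + 1 = n + 1 + m + m)%N by lia.
  have -> : (m + n + 1 = n + 1 + m)%N by lia.
  lia.
- move=> h; have [ho hk'] := par2 k h; set m := (k %/ 2)%N in ho hk' *.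
  have [_ _ _ g] := G (n + 1) m; rewrite sgn ho in g.
  rewrite S2 [in LHS]hk'.
  have -> : (n + (m + m) + 1 = n + 1 + m + m)%N by lia.
  have -> : (m + n + 1 = n + 1 + m)%N by lia.
  lia.
- by rewrite (@toQd _ _ 4 (S3 k n)) // toQB.
- move=> ho; have [_ _ g _] := G (2 * n + 1) k; rewrite sgn (negbTE ho) in g.
  have e : sigma Bal k n * 2 = Pell k * QPell (k + 2 * n + 1).
    apply/(@mulIf _ 2) => //. have s3 := S3 k n.
    rewrite (_ : (2 * k + 2 * n + 1 = 2 * n + 1 + k + k)%N) in s3; last lia.
    rewrite (_ : (k + 2 * n + 1 = 2 * n + 1 + k)%N); last lia.
    lia.
  by rewrite (@toQd _ _ 2 e) // toQM.
- move=> ho; have [_ _ _ g] := G (2 * n + 1) k; rewrite sgn ho in g.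
  have e : sigma Bal k n * 2 = QPell k * Pell (k + 2 * n + 1).
    apply/(@mulIf _ 2) => //. have s3 := S3 k n.
    rewrite (_ : (2 * k + 2 * n + 1 = 2 * n + 1 + k + k)%N) in s3; last lia.
    rewrite (_ : (k + 2 * n + 1 = 2 * n + 1 + k)%N); last lia.
    lia.
  by rewrite (@toQd _ _ 2 e) // toQM.
- by rewrite (@toQd _ _ 2 (S4 k n)) // toQB.
- move=> ho; have [g _ _ _] := G (2 * n + 1) k; rewrite sgn (negbTE ho) in g.
  apply/(@mulIf _ 2) => //. have s := S4 k n.
  rewrite (_ : (2 * k + 2 * n + 1 = 2 * n + 1 + k + k)%N) in s; last lia.
  rewrite (_ : (k + 2 * n + 1 = 2 * n + 1 + k)%N); last lia.
  lia.
- move=> ho; have [_ g _ _] := G (2 * n + 1) k; rewrite sgn ho in g.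
  apply/(@mulIf _ 2) => //. have s := S4 k n.
  rewrite (_ : (2 * k + 2 * n + 1 = 2 * n + 1 + k + k)%N) in s; last lia.
  rewrite (_ : (k + 2 * n + 1 = 2 * n + 1 + k)%N); last lia.
  lia.
- by rewrite (@toQd _ _ 2 (S5 k n)) // toQB.
- move=> ho; have [g _ _ _] := G (2 * n) k; rewrite sgn (negbTE ho) in g.
  apply/(@mulIf _ 2) => //. have s := S5 k n.
  rewrite (_ : (2 * k + 2 * n = 2 * n + k + k)%N) in s; last lia.
  rewrite (_ : (k + 2 * n = 2 * n + k)%N); last lia.
  lia.
- move=> ho; have [_ g _ _] := G (2 * n) k; rewrite sgn ho in g.
  apply/(@mulIf _ 2) => //. have s := S5 k n.
  rewrite (_ : (2 * k + 2 * n = 2 * n + k + k)%N) in s; last lia.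
  rewrite (_ : (k + 2 * n = 2 * n + k)%N); last lia.
  lia.
Qed.
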